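(* If $H$ is a triangle-free simple graph and $k \geq 1$, then $\tau(I_k \vee H) \leq 2\nu(I_k \vee H)$.
   Context: $I_k$ is an independent set of $k$ vertices; the join $G_1\vee G_2$ is obtained from the disjoint union of $G_1,G_2$ by adding all edges between $V(G_1)$ and $V(G_2)$. $\tau(G)$ is the minimum size of an edge set $X$ with $G-X$ triangle-free; $\nu(G)$ is the maximum number of pairwise edge-disjoint triangles in $G$. *)

(* Defs.v *)
From mathcomp Require Import all_boot.
From mathcomp Require Import all_order.
Set Implicit Arguments. Unset Strict Implicit. Unset Printing Implicit Defensive.

Definition simple_graph (T : finType) (g : rel T) : Prop :=
  symmetric g /\ irreflexive g.

Definition edges (T : finType) (g : rel T) : {set {set T}} :=
  [set E : {set T} | [exists x, exists y, g x y && (E == [set x; y])]].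

Definition triangles (T : finType) (g : rel T) : {set {set T}} :=
  [set t : {set T} | [exists x, exists y, exists z,
     [&& g x y, g y z, g x z & t == [set x; y; z]]]].

Definition triangle_free (T : finType) (g : rel T) : Prop :=
  forall x y z : T, ~~ [&& g x y, g y z & g x z].

Definition tri_edges (T : finType) (t : {set T}) : {set {set T}} :=
  [set E : {set T} | (E \subset t) && (#|E| == 2)].

(* X is a set of edges whose deletion makes g triangle-free:
   every triangle of g contains an edge of X. *)
Definition tri_hitting (T : finType) (g : rel T) (X : {set {set T}}) : bool :=
  (X \subset edges g) &&
  [forall t in triangles g, [exists E in X, E \in tri_edges t]].

Definition tri_packing (T : finType) (g : rel T) (F : {set {set T}}) : bool :=
  (F \subset triangles g) &&
  [forall t1 in F, forall t2 in F,
     (t1 != t2) ==> [disjoint tri_edges t1 & tri_edges t2]].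

(* tau(G): minimum size of an edge set whose removal leaves G triangle-free.
   The whole edge set always qualifies (for a simple graph), so the
   arg min below is over a nonempty domain. *)
Definition tau (T : finType) (g : rel T) : nat :=
  #|[arg min_(X < edges g | tri_hitting g X) #|X| ]|.

Definition nu (T : finType) (g : rel T) : nat :=
  \max_(F : {set {set T}} | tri_packing g F) #|F|.

Definition join_Ik (k : nat) {V : finType} (h : rel V) : rel ('I_k + V) :=
  fun u v => match u, v with
             | inl _, inl _ => false
             | inr x, inr y => h x y
             | _, _ => true
             end.
Arguments join_Ik k {V} h.

(* Main.v *)
Require Import Defs.
From mathcomp Require Import all_boot all_order.
From mathcomp Require Import zify.
Set Implicit Arguments. Unset Strict Implicit. Unset Printing Implicit Defensive.


Section Leaf.
Variables (T : finType) (r : rel T).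
Hypothesis rsym : symmetric r.
Hypothesis deg2 : forall v z1 z2 z3, r v z1 -> r v z2 -> r v z3 ->
  [|| z1 == z2, z1 == z3 | z2 == z3].
Definition leaf v := forall z1 z2, r v z1 -> r v z2 -> z1 = z2.

Lemma leaf3 a b c : leaf a -> leaf b -> leaf c ->
  connect r a b -> connect r a c -> a != b -> a != c -> b != c -> False.
Proof.
move=> la lb lc /connectP[p0 pp0 eb] ac ab ac' bc; subst b.
move: lb ab bc; case: (shortenP pp0) => p pp up _ lb ab bc {pp0}.
have pn : 0 < size p by case: p pp up lb ab {bc} => //= _ _ _; rewrite eqxx.
have nb : nth a (a :: p) (size p) = last a p by rewrite (last_nth a).
have ri : forall i, i < size p -> r (nth a (a :: p) i) (nth a (a::p) i.+1).
  by move=> i ip; exact: (pathP a pp).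
have clos : forall x z, x \in a :: p -> r x z -> z \in a :: p.
  move=> x z xs rxz; have [i ip xi] : exists2 i, i < size (a :: p) & x = nth a (a::p) i.
    by exists (index x (a::p)); rewrite ?index_mem ?nth_index.
  rewrite /= ltnS in ip; rewrite xi {x xi xs} in rxz.
  case: i ip rxz => [|i] ip rxz.
    have r1 := ri 0 pn; rewrite -(la _ _ r1 rxz); by apply: mem_nth; rewrite /= ltnS.
  have r1 : r (nth a (a :: p) i.+1) (nth a (a :: p) i).
    by rewrite rsym; apply: ri.
  case: (ltnP i.+1 (size p)) => ii.
    have r2 := ri _ ii.
    case/or3P: (deg2 r1 r2 rxz) => [/eqP E|/eqP<-|/eqP<-].
    - have : index (nth a (a::p) i) (a::p) = index (nth a (a::p) i.+2) (a::p) by rewrite E.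
      rewrite !index_uniq //= ?ltnS // ?(ltnW (ltnW ii)) //.
      lia.
    - by apply: mem_nth; rewrite /= ltnS; apply: ltnW; apply: ltnW.
    - by apply: mem_nth; rewrite /= ltnS.
  have ie : i.+1 = size p by apply/eqP; rewrite eqn_leq ip ii.
  move: r1 rxz; rewrite ie nb => r1 rxz; rewrite -(lb _ _ r1 rxz); apply: mem_nth.
  by rewrite /= ltnS -ie.
have cs : c \in a :: p.
  case/connectP: ac => q pq ->.
  have : forall x, x \in a :: p -> path r x q -> last x q \in a :: p.
    elim: q {pq} => [|z q IH] x //= xs /andP[rxz pq].
    by apply: IH pq; apply: clos rxz.
  by apply; rewrite ?mem_head.
have [i ip ci] : exists2 i, i < size (a :: p) & c = nth a (a::p) i.
  by exists (index c (a::p)); rewrite ?index_mem ?nth_index.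
rewrite /= ltnS in ip.
case: i ip ci => [|i] ip ci; first by rewrite ci eqxx in ac'.
case: (ltnP i.+1 (size p)) => ii; last first.
  have ie : i.+1 = size p by apply/eqP; rewrite eqn_leq ip ii.
  by rewrite ci ie nb eqxx in bc.
have r1 : r c (nth a (a :: p) i) by rewrite ci rsym; apply: ri.
have r2 : r c (nth a (a :: p) i.+2) by rewrite ci; apply: ri.
have E := lc _ _ r1 r2.
have : index (nth a (a::p) i) (a::p) = index (nth a (a::p) i.+2) (a::p) by rewrite E.
rewrite !index_uniq //= ?ltnS // ?(ltnW (ltnW ii)) //.
lia.
Qed.
End Leaf.


Section Col.
Variables (V : finType) (h : rel V) (k : nat).
Hypothesis hsym : symmetric h.
Hypothesis hirr : irreflexive h.

Definition colT := {ffun V * V -> option 'I_k}.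
Definition valid (c : colT) :=
  [forall x, forall y, (c (x,y) == c (y,x)) && ((c (x,y) != None) ==> h x y)] &&
  [forall x, forall y, forall z, ((c (x,y) != None) && (c (x,y) == c (x,z))) ==> (y == z)].
Definition csize (c : colT) := #|[set p | c p != None]|.
Definition present (c : colT) v a := [exists z, c (v,z) == Some a].

Lemma validP (c : colT) : reflect
  [/\ forall x y, c (x,y) = c (y,x), forall x y, c (x,y) != None -> h x y &
      forall x y z a, c (x,y) = Some a -> c (x,z) = Some a -> y = z] (valid c).
Proof.
apply: (iffP andP) => [[/forallP A /forallP B]|[A B C]].
  split.
  - by move=> x y; have /forallP/(_ y)/andP[/eqP] := A x.
  - by move=> x y; have /forallP/(_ y)/andP[_ /implyP] := A x.
  - move=> x y z a e1 e2; have /forallP/(_ y)/forallP/(_ z)/implyP := B x.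
    by rewrite e1 e2 eqxx => /(_ isT)/eqP.
split; apply/forallP => x; apply/forallP => y.
  by rewrite A eqxx /=; apply/implyP; rewrite -A; apply: B.
apply/forallP => z; apply/implyP => /andP[]; case E: (c (x,y)) => [a|] // _ /eqP E2.
by apply/eqP; apply: (C x y z a).
Qed.

Definition addc (c : colT) u y a : colT :=
  [ffun p => if (p == (u,y)) || (p == (y,u)) then Some a else c p].

Lemma presentP (c : colT) v a : reflect (exists z, c (v,z) = Some a) (present c v a).
Proof. by apply: (iffP existsP) => [[z /eqP]|[z E]]; exists z => //; apply/eqP. Qed.

Lemma valid_add (c : colT) u y a : valid c -> h u y -> c (u,y) = None ->
  ~~ present c u a -> ~~ present c y a -> valid (addc c u y a).
Proof.
move=> /validP[S Hh P] huy cuy /presentP nu /presentP ny.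
have uy : u != y by apply: contraTneq huy => ->; rewrite hirr.
apply/validP; split.
- move=> x z; rewrite !ffunE !xpair_eqE.
  by case: (x == u) (z == y) (x == y) (z == u) => [] [] [] [] //=; rewrite S.
- move=> x z; rewrite !ffunE !xpair_eqE.
  case: ifP => [/orP[]/andP[/eqP-> /eqP->]|_] H //; first by rewrite hsym. exact: Hh.
- move=> x z1 z2 b; rewrite !ffunE !xpair_eqE.
  case: (x =P u) => [xu|xu]; case: (x =P y) => [xy|xy] /=.
  + by move: uy; rewrite -xu -xy eqxx.
  + subst x; case: (z1 =P y) => [->|_]; case: (z2 =P y) => [->|_] //=.
    * by move=> [<-] E; case: nu; exists z2.
    * by move=> E [E2]; case: nu; exists z1; rewrite E -E2.
    * by apply: P.
  + subst x; case: (z1 =P u) => [->|_]; case: (z2 =P u) => [->|_] //=.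
    * by move=> [<-] E; case: ny; exists z2.
    * by move=> E [E2]; case: ny; exists z1; rewrite E -E2.
    * by apply: P.
  + by apply: P.
Qed.

Lemma csize_add (c : colT) u y a : valid c -> h u y -> c (u,y) = None ->
  csize c < csize (addc c u y a).
Proof.
move=> vc huy cuy; rewrite /csize; apply: proper_card; apply/properP; split.
  by apply/subsetP => p; rewrite !inE /addc ffunE; case: ifP.
exists (u,y); rewrite !inE /addc; first by rewrite ffunE eqxx. by rewrite cuy.
Qed.

Definition sw (al be : 'I_k) (v : option 'I_k) :=
  if v == Some al then Some be else if v == Some be then Some al else v.
Lemma swK al be : involutive (sw al be).
Proof.
move=> [x|] //; rewrite /sw.
have E : forall y z : 'I_k, (Some y == Some z) = (y == z) by [].
rewrite !E; case: (x =P al) => [->|xa]; rewrite ?eqxx.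
  by rewrite E; case: (be =P al) => [->|]; rewrite ?eqxx // => /eqP/negbTE ->; rewrite eqxx.
case: (x =P be) => [->|xb] //=; rewrite ?E ?eqxx //.
by rewrite (introF eqP xa) (introF eqP xb).
Qed.
Lemma sw_None al be v : (sw al be v == None) = (v == None).
Proof. by rewrite /sw; case: ifP => [/eqP->//|_]; case: ifP => [/eqP->//|//]. Qed.

Definition swapc (c : colT) (S : {set V}) al be : colT :=
  [ffun p => if p.1 \in S then sw al be (c p) else c p].

Definition rab (c : colT) al be : rel V :=
  fun x z => (c (x,z) == Some al) || (c (x,z) == Some be).

Lemma valid_swap (c : colT) (S : {set V}) al be : valid c ->
  (forall x z, x \in S -> rab c al be x z -> z \in S) -> valid (swapc c S al be).
Proof.
move=> /validP[Sy Hh P] cl.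
have cl2 : forall x z, rab c al be x z -> (x \in S) = (z \in S).
  move=> x z r; apply/idP/idP => [/cl|]; first exact.
  by move/cl; apply; rewrite /rab Sy.
apply/validP; split.
- move=> x z; rewrite !ffunE /=.
  case R: (rab c al be x z).
    by rewrite (cl2 _ _ R) Sy; case: (z \in S).
  move: R; rewrite /rab /sw Sy => /norP[/negbTE -> /negbTE ->].
  by case: (x \in S); case: (z \in S).
- by move=> x z; rewrite ffunE /=; case: (x \in S); rewrite ?sw_None; exact: Hh.
- move=> x z1 z2 a; rewrite !ffunE /=; case: (x \in S); last exact: P.
  move=> E1 E2; have := congr1 (sw al be) E1; have := congr1 (sw al be) E2.
  rewrite !swK; case Esw: (sw al be (Some a)) => [b|]; first by move=> e2 e1; exact: P e1 e2.
  by move: (sw_None al be (Some a)); rewrite Esw.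
Qed.

Lemma csize_swap (c : colT) (S : {set V}) al be : csize (swapc c S al be) = csize c.
Proof.
rewrite /csize; apply: eq_card => p; rewrite !inE ffunE.
by case: (p.1 \in S); rewrite // sw_None.
Qed.


Definition maxc (c : colT) := valid c /\ forall c', valid c' -> csize c' <= csize c.

Lemma present_swap_out (c : colT) (S : {set V}) al be v a : v \notin S ->
  present (swapc c S al be) v a = present c v a.
Proof. by move=> vS; apply: eq_existsb => z; rewrite ffunE /= (negbTE vS). Qed.

Lemma present_swap_in (c : colT) (S : {set V}) al be v : v \in S ->
  present (swapc c S al be) v be = present c v al.
Proof.
move=> vS; apply: eq_existsb => z; rewrite ffunE /= vS.
have -> : Some be = sw al be (Some al) by rewrite /sw eqxx.
by rewrite (inj_eq (can_inj (swK al be))).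
Qed.

Lemma kempe (c : colT) al be u y : maxc c -> h u y -> c (u,y) = None ->
  ~~ present c u be -> ~~ present c y al -> connect (rab c al be) y u.
Proof.
move=> [vc mx] huy cuy pu py; apply: contraT => nc.
set S := [set x | connect (rab c al be) y x].
have cl : forall x z, x \in S -> rab c al be x z -> z \in S.
  by move=> x z; rewrite !inE => yx xz; apply: connect_trans yx (connect1 xz).
have vc' := valid_swap vc cl.
have uS : u \notin S by rewrite inE.
have yS : y \in S by rewrite inE connect0.
have c'uy : swapc c S al be (u,y) = None by rewrite ffunE /= (negbTE uS).
have pu' : ~~ present (swapc c S al be) u be by rewrite present_swap_out.
have py' : ~~ present (swapc c S al be) y be by rewrite present_swap_in.
have va := valid_add vc' huy c'uy pu' py'.
have := csize_add be vc' huy c'uy; rewrite csize_swap => lt.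
by have := mx _ va; rewrite leqNgt lt.
Qed.

Definition full (c : colT) v := [forall a, present c v a].

Lemma deg_bound (c : colT) u : maxc c -> ~~ full c u ->
  #|[set y | h u y && (c (u,y) == None) && ~~ full c y]| <= #|[set z | c (u,z) != None]|.
Proof.
move=> [vc mx] /forallPn[be pube].
have [Sy Hh P] := validP _ vc.
set A := [set y | _].
pose alp y := if [pick a | ~~ present c y a] is Some a then a else be.
have alpP : forall y, ~~ full c y -> ~~ present c y (alp y).
  move=> y /forallPn[a pa]; rewrite /alp; case: pickP => // /(_ a); by rewrite pa.
have pres : forall y, y \in A -> present c u (alp y).
  move=> y; rewrite !inE => /andP[/andP[huy /eqP cuy] fy]; apply: contraT => np.
  have va := valid_add vc huy cuy np (alpP _ fy).
  have := csize_add (alp y) vc huy cuy.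
  by have := mx _ va; rewrite leqNgt => /negbTE ->.
pose g y := if [pick z | c (u,z) == Some (alp y)] is Some z then z else u.
have gP : forall y, y \in A -> c (u, g y) = Some (alp y).
  move=> y /pres /presentP[z cz]; rewrite /g; case: pickP => [z' /eqP //|/(_ z)].
  by rewrite cz eqxx.
have rsym : symmetric (rab c (alp u) be).
  by move=> x z; rewrite /rab Sy.
suff inj : {in A &, injective g}.
  rewrite -(card_in_imset inj); apply: subset_leq_card; apply/subsetP => z.
  by case/imsetP => y yA ->; rewrite inE gP.
move=> y1 y2 y1A y2A ge; apply/eqP/negP => /negP ne.
have ea : alp y1 = alp y2.
  by have := gP _ y1A; rewrite ge gP // => -[].
set al := alp y1.
have r := rab c al be.
have Ay : forall y, y \in A -> [/\ h u y, c (u,y) = None & ~~ full c y].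
  by move=> y; rewrite !inE => /andP[/andP[-> /eqP ->] ->].
have [h1 c1 f1] := Ay _ y1A; have [h2 c2 f2] := Ay _ y2A.
have pa1 : ~~ present c y1 al := alpP _ f1.
have pa2 : ~~ present c y2 al by rewrite /al ea; exact: alpP.
have k1 := kempe (conj vc mx) h1 c1 pube pa1.
have k2 := kempe (conj vc mx) h2 c2 pube pa2.
have rs : symmetric (rab c al be) by move=> x z; rewrite /rab Sy.
have ne0 : forall x y, h x y -> x != y by move=> x z hxz; apply: contraTneq hxz => ->; rewrite hirr.
apply: (@leaf3 _ (rab c al be) rs _ u y1 y2).
- move=> v z1 z2 z3; rewrite /rab.
  have E : forall zi zj b, c (v,zi) = Some b -> c (v,zj) = Some b -> zi == zj.
    by move=> zi zj b e1 e2; apply/eqP; apply: P e1 e2.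
  by move=> /orP[] /eqP e1 /orP[] /eqP e2 /orP[] /eqP e3;
     rewrite ?(E _ _ _ e1 e2) ?(E _ _ _ e1 e3) ?(E _ _ _ e2 e3) ?orbT.
- move=> z1 z2; rewrite /rab => /orP[] /eqP e1 /orP[] /eqP e2;
    try (by apply: P e1 e2); by case/negP: pube; apply/presentP; eexists; eassumption.
- move=> z1 z2; rewrite /rab => /orP[] /eqP e1 /orP[] /eqP e2;
    try (by apply: P e1 e2); by case/negP: pa1; apply/presentP; eexists; eassumption.
- move=> z1 z2; rewrite /rab => /orP[] /eqP e1 /orP[] /eqP e2;
    try (by apply: P e1 e2); by case/negP: pa2; apply/presentP; eexists; eassumption.
- by rewrite (sym_connect_sym rs).
- by rewrite (sym_connect_sym rs).
- exact: ne0.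
- exact: ne0.
- exact: ne.
Qed.

End Col.


Lemma card_pairs (V : finType) (P : V -> V -> bool) :
  #|[set p : V * V | P p.1 p.2]| = \sum_v #|[set y | P v y]|.
Proof.
transitivity (\sum_v \sum_y nat_of_bool (P v y)).
  rewrite (pair_bigA _ (fun v y => nat_of_bool (P v y))) -sum1_card big_mkcond /=.
  by apply: eq_bigr => p _; rewrite inE.
apply: eq_bigr => v _; rewrite -sum1_card.
by rewrite [RHS]big_mkcond; apply: eq_bigr => y _; rewrite inE; case: (P v y).
Qed.

Lemma card_setU_le (T : finType) (A B C : {set T}) : A \subset B :|: C -> #|A| <= #|B| + #|C|.
Proof. by move=> s; apply: leq_trans (subset_leq_card s) _; rewrite cardsU leq_subr. Qed.

Section Count.
Variables (V : finType) (h : rel V) (k : nat).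
Hypothesis hsym : symmetric h.
Hypothesis hirr : irreflexive h.

Definition deg (c : colT V k) v := #|[set z | c (v,z) != None]|.

Lemma csize_sum (c : colT V k) : csize c = \sum_v deg c v.
Proof. by rewrite /csize -card_pairs; apply: eq_card => -[x y]; rewrite !inE. Qed.

Lemma full_deg (c : colT V k) v : valid h c -> full c v -> k <= deg c v.
Proof.
move=> /validP[S Hh P] /forallP fv.
pose g (a : 'I_k) := if [pick z | c (v,z) == Some a] is Some z then z else v.
have gP : forall a, c (v, g a) = Some a.
  move=> a; have /presentP[z cz] := fv a; rewrite /g; case: pickP => [z' /eqP //|/(_ z)].
  by rewrite cz eqxx.
have inj : injective g by move=> a b e; have := gP a; rewrite e gP => -[].
rewrite -{1}(card_ord k) -(card_imset _ inj) /deg; apply: subset_leq_card.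
by apply/subsetP => z /imsetP[a _ ->]; rewrite inE gP.
Qed.

Lemma core (c : colT V k) : maxc h c ->
  2 * (k * #|[set v | full c v]|) + #|[set p : V * V | h p.1 p.2 &&
     (p.1 \notin [set v | full c v]) && (p.2 \notin [set v | full c v])]|
  <= 2 * csize c.
Proof.
move=> mc; set X := [set v | full c v]; have vc := mc.1.
rewrite csize_sum (card_pairs (fun x y => h x y && (x \notin X) && (y \notin X))).
rewrite [X in _ <= 2 * X](bigID (fun v => v \in X)) /= mulnDr.
rewrite [X in _ + X <= _](bigID (fun v => v \in X)) /=.
have -> : \sum_(i in X) #|[set y | h i y && (i \notin X) && (y \notin X)]| = 0.
  by apply: big1 => i; rewrite inE => iX; apply/eqP; rewrite cards_eq0; apply/eqP/setP => y; rewrite !inE iX /= andbF.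
rewrite add0n leq_add //.
  rewrite leq_mul2l mulnC -sum_nat_const; apply/orP; right.
  by apply: leq_sum => v; rewrite inE => vX; apply: full_deg.
rewrite big_distrr /=; apply: leq_sum => v vX.
rewrite mul2n -addnn.
apply: (leq_trans (@card_setU_le _ _ [set z | c (v,z) != None] [set y | h v y && (c (v,y) == None) && ~~ full c y] _)).
  apply/subsetP => y; rewrite !inE => /andP[/andP[hvy _] yX].
  by rewrite hvy /= yX andbT orNb.
rewrite leq_add2l; apply: deg_bound => //.
by move: vX; rewrite inE.
Qed.
End Count.


Section Join.
Variables (V : finType) (h : rel V) (k : nat).
Hypothesis hsym : symmetric h.
Hypothesis hirr : irreflexive h.
Hypothesis htf : triangle_free h.

Local Notation g := (join_Ik k h).
Local Notation T := ('I_k + V)%type.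

Lemma tri_char t : t \in triangles g ->
  exists a x y, h x y /\ t = [set inl a; inr x; inr y].
Proof.
rewrite inE => /existsP[p /existsP[q /existsP[r /and4P[pq qr pr /eqP ->]]]].
case: p q r pq qr pr => [a|x] [b|y] [c|z] //=.
- by move=> _ hyz _; exists a, y, z.
- move=> _ _ hxz; exists b, x, z; split=> //; apply/setP => w; rewrite !inE.
  by rewrite (orbC (w == inr x)).
- move=> hxy _ _; exists c, x, y; split=> //; apply/setP => w; rewrite !inE.
  by rewrite orbC orbA.
- by move=> hxy hyz hxz; case/negP: (htf x y z); rewrite hxy hyz hxz.
Qed.

Lemma eq_inl (a b : 'I_k) : (inl a == inl b :> T) = (a == b).
Proof. by apply/eqP/eqP => [[]|->]. Qed.
Lemma eq_inr (a b : V) : (inr a == inr b :> T) = (a == b).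
Proof. by apply/eqP/eqP => [[]|->]. Qed.
Lemma eq_inlr (a : 'I_k) (b : V) : (inl a == inr b :> T) = false.
Proof. by apply/eqP. Qed.
Lemma eq_inrl (a : 'I_k) (b : V) : (inr b == inl a :> T) = false.
Proof. by apply/eqP. Qed.
Definition eqT := (eq_inl, eq_inr, eq_inlr, eq_inrl).

Lemma te2 (t : {set T}) p q : p != q -> p \in t -> q \in t -> [set p; q] \in tri_edges t.
Proof.
by move=> pq pt qt; rewrite inE cards2 pq andbT subUset !sub1set pt qt.
Qed.

Lemma edges_in p q : g p q -> [set p; q] \in edges g.
Proof. by move=> gpq; rewrite inE; apply/existsP; exists p; apply/existsP; exists q; rewrite gpq eqxx. Qed.


Definition rlt (x y : V) := (enum_rank x < enum_rank y)%N.

Lemma half (P : V -> V -> bool) : (forall x y, P x y = P y x) -> (forall x, ~~ P x x) ->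
  #|[set p : V * V | P p.1 p.2]| = 2 * #|[set p : V * V | P p.1 p.2 && rlt p.1 p.2]|.
Proof.
move=> Ps Pi.
set S1 := [set p : V * V | P p.1 p.2 && rlt p.1 p.2].
set S2 := [set p : V * V | P p.1 p.2 && rlt p.2 p.1].
have -> : [set p : V * V | P p.1 p.2] = S1 :|: S2.
  apply/setP => -[x y]; rewrite !inE /=; case Pxy: (P x y) => //=.
  rewrite /rlt; have : enum_rank x != enum_rank y.
    by apply: contraNneq (Pi x) => /enum_rank_inj E; rewrite {2}E Pxy.
  by rewrite neq_ltn.
rewrite cardsU.
have -> : S1 :&: S2 = set0.
  apply/setP => -[x y]; rewrite !inE /= /rlt.
  by case: (P x y) => //=; case: ltngtP.
have -> : S2 = [set (p.2, p.1) | p in S1].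
  apply/setP => -[x y]; rewrite inE /=; apply/idP/imsetP => [H|[[a b] ab [-> ->]]].
    by exists (y, x); rewrite // inE /= Ps.
  by move: ab; rewrite inE /= Ps.
rewrite cards0 subn0 card_imset ?addnn ?mul2n //.
by move=> [a b] [c d] [-> ->].
Qed.

Definition cover_set (X : {set V}) : {set {set T}} :=
  [set [set inl p.1; inr p.2] | p in setX [set: 'I_k] X] :|:
  [set [set inr p.1; inr p.2] | p in [set p : V * V | h p.1 p.2 && (p.1 \notin X) && (p.2 \notin X) && rlt p.1 p.2]].

Lemma cover_hit X : tri_hitting g (cover_set X).
Proof.
apply/andP; split.
  apply/subsetP => E; rewrite inE => /orP[] /imsetP[p pin ->]; apply: edges_in => //.
  by move: pin; rewrite !inE => /andP[/andP[/andP[]]].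
apply/forallP => t; apply/implyP => /tri_char[a [x [y [hxy ->]]]].
have xy : x != y by apply: contraTneq hxy => ->; rewrite hirr.
have inl_ne : forall (b : 'I_k) (z : V), (inl b : T) != inr z by [].
have inr_ne : forall z w : V, z != w -> (inr z : T) != inr w.
  by move=> z w; apply: contra => /eqP[->].
have fin : forall E, E \in cover_set X -> E \in tri_edges [set inl a; inr x; inr y] ->
  [exists E in cover_set X, E \in tri_edges [set inl a; inr x; inr y]].
  by move=> E E1 E2; apply/existsP; exists E; rewrite E1 E2.
case xX: (x \in X).
  apply: (fin [set inl a; inr x]); last by apply: te2 => //; by rewrite !inE eqxx ?orbT.
  by rewrite inE; apply/orP; left; apply/imsetP; exists (a, x); rewrite // !inE xX.
case yX: (y \in X).
  apply: (fin [set inl a; inr y]); last by apply: te2 => //; by rewrite !inE eqxx ?orbT.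
  by rewrite inE; apply/orP; left; apply/imsetP; exists (a, y); rewrite // !inE yX.
have : enum_rank x != enum_rank y by apply: contra xy => /eqP /enum_rank_inj ->.
rewrite neq_ltn => /orP[lxy|lyx].
  apply: (fin [set inr x; inr y]); last by apply: te2; [exact: inr_ne | |]; by rewrite !inE eqxx ?orbT.
  rewrite inE; apply/orP; right; apply/imsetP; exists (x, y) => //.
  by rewrite inE /= hxy xX yX.
apply: (fin [set inr y; inr x]); last first.
  by apply: te2; [apply: inr_ne; rewrite eq_sym | rewrite !inE eqxx ?orbT | rewrite !inE eqxx ?orbT].
rewrite inE; apply/orP; right; apply/imsetP; exists (y, x) => //.
by rewrite inE /= hsym hxy xX yX.
Qed.




Lemma cover_card X : #|cover_set X| <=
  k * #|X| + #|[set p : V * V | h p.1 p.2 && (p.1 \notin X) && (p.2 \notin X) && rlt p.1 p.2]|.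
Proof.
apply: leq_trans (card_setU_le (subxx _)) _; apply: leq_add.
  by apply: leq_trans (leq_imset_card _ _) _; rewrite cardsX cardsT card_ord.
exact: leq_imset_card.
Qed.

Lemma edges_hit : tri_hitting g (edges g).
Proof.
apply/andP; split => //; apply/forallP => t; apply/implyP => /tri_char[a [x [y [hxy ->]]]].
apply/existsP; exists [set inl a; inr x]; rewrite edges_in //=.
by apply: te2 => //; rewrite !inE eqxx ?orbT.
Qed.

Lemma tau_le Y : tri_hitting g Y -> tau g <= #|Y|.
Proof.
move=> hY; rewrite /tau; case: arg_minnP; first exact: edges_hit.
by move=> Z _ m; apply: m.
Qed.


Lemma two_pts (x y x' y' z1 z2 : V) : rlt x y -> rlt x' y' -> z1 != z2 ->
  (z1 == x) || (z1 == y) -> (z2 == x) || (z2 == y) ->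
  (z1 == x') || (z1 == y') -> (z2 == x') || (z2 == y') -> x = x' /\ y = y'.
Proof.
rewrite /rlt => l1 l2 ne.
by move=> /orP[]/eqP e1 /orP[]/eqP e2 /orP[]/eqP e3 /orP[]/eqP e4; subst;
  rewrite ?eqxx in ne; try done; move: l1 l2; rewrite ?e3 ?e4; try lia.
Qed.

Definition Qset (c : colT V k) : {set 'I_k * (V * V)} :=
  [set p | (c p.2 == Some p.1) && rlt p.2.1 p.2.2].
Definition tri_of (p : 'I_k * (V * V)) : {set T} := [set inl p.1; inr p.2.1; inr p.2.2].
Definition pack (c : colT V k) := [set tri_of p | p in Qset c].


Lemma share (c : colT V k) a x y x' y' z : valid h c -> c (x,y) = Some a -> c (x',y') = Some a ->
  rlt x y -> rlt x' y' -> (z == x) || (z == y) -> (z == x') || (z == y') -> x = x' /\ y = y'.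
Proof.
move=> /validP[S _ P] e1 e2 l1 l2.
have s1 : c (y,x) = Some a by rewrite S.
have s2 : c (y',x') = Some a by rewrite S.
move: l1 l2; rewrite /rlt => l1 l2.
move=> /orP[]/eqP z1 /orP[]/eqP z2; subst z.
- by subst x'; split=> //; apply: P e1 e2.
- subst y'; have := P _ _ _ _ e1 s2; move=> E; subst x'; lia.
- subst x'; have := P _ _ _ _ s1 e2; move=> E; subst y'; lia.
- by subst y'; split=> //; apply: P s1 s2.
Qed.

Lemma pack_card (c : colT V k) : valid h c ->
  #|pack c| = #|[set p : V * V | (c p != None) && rlt p.1 p.2]|.
Proof.
move=> vc.
have ->: [set p : V * V | (c p != None) && rlt p.1 p.2] = [set p.2 | p in Qset c].
  apply/setP => -[x y]; rewrite inE /=; apply/idP/imsetP.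
    case E: (c (x,y)) => [a|] //= l; exists (a, (x,y)) => //.
    by rewrite inE /= E eqxx.
  by move=> [[a [x' y']]]; rewrite inE /= => /andP[/eqP E l] [-> ->]; rewrite E.
rewrite card_in_imset ?card_in_imset //.
  by move=> [a q] [b q'] ; rewrite !inE /= => /andP[/eqP e1 _] /andP[/eqP e2 _] E; subst q'; move: e1; rewrite e2 => -[->].
move=> [a [x y]] [b [x' y']]; rewrite !inE /= => /andP[/eqP e1 l1] /andP[/eqP e2 l2] E.
have m : forall w, (w \in tri_of (a,(x,y))) = (w \in tri_of (b,(x',y'))) by move=> w; rewrite E.
have := m (inl a); rewrite !inE !eqT eqxx /= !orbF => /esym/eqP ab; subst b.
have := m (inr x); rewrite !inE !eqT eqxx orbT /= => /esym mx.
have := m (inr y); rewrite !inE !eqT eqxx orbT /= => /esym my.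
have := m (inr x'); rewrite !inE !eqT eqxx orbT /= => mx'.
have := m (inr y'); rewrite !inE !eqT eqxx orbT /= => my'.
have xy : x != y by apply/eqP => E'; move: l1; rewrite /rlt E'; lia.
by have [-> ->] := two_pts l1 l2 xy (introT orP (or_introl (eqxx x))) (introT orP (or_intror (eqxx y))) mx my.
Qed.


Lemma tri_meet (c : colT V k) p q e1 e2 : valid h c -> p \in Qset c -> q \in Qset c ->
  e1 != e2 -> e1 \in tri_of p -> e2 \in tri_of p -> e1 \in tri_of q -> e2 \in tri_of q -> p = q.
Proof.
move: p q => [a [x y]] [b [x' y']] vc; rewrite !inE /= => /andP[/eqP c1 l1] /andP[/eqP c2 l2].
case: e1 => [d1|z1]; case: e2 => [d2|z2]; rewrite !eqT /= ?orbF => ne.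
- by move=> /eqP E1 /eqP E2; move: ne; rewrite E1 E2 eqxx.
- move=> /eqP da m1 /eqP db m2; subst d1 b.
  by have [-> ->] := share vc c1 c2 l1 l2 m1 m2.
- move=> m1 /eqP da m2 /eqP db; subst d2 b.
  by have [-> ->] := share vc c1 c2 l1 l2 m1 m2.
- move=> m1 m2 m3 m4.
  have [ex ey] := two_pts l1 l2 ne m1 m2 m3 m4; subst x' y'.
  by move: c1; rewrite c2 => -[->].
Qed.

Lemma pack_ok (c : colT V k) : valid h c -> tri_packing g (pack c).
Proof.
move=> vc; have /validP[S Hh P] := vc; apply/andP; split.
  apply/subsetP => t /imsetP[[a [x y]] pin ->]; move: pin; rewrite inE /= => /andP[/eqP cxy _].
  rewrite inE; apply/existsP; exists (inl a); apply/existsP; exists (inr x); apply/existsP; exists (inr y).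
  by rewrite /= (Hh x y) ?cxy // eqxx.
apply/forallP => t1; apply/implyP => /imsetP[p pin ->].
apply/forallP => t2; apply/implyP => /imsetP[q qin ->].
apply/implyP => ne; apply/pred0P => E /=; apply/negP => /andP[].
rewrite !inE => /andP[s1 /cards2P[e1 [e2 [ne12 EE]]]] /andP[s2 _].
move: s1 s2; rewrite EE !subUset !sub1set => /andP[m1 m2] /andP[m3 m4].
by move: ne; rewrite (tri_meet vc pin qin ne12 m1 m2 m3 m4) eqxx.
Qed.

Lemma nu_ge F : tri_packing g F -> #|F| <= nu g.
Proof. by move=> pF; rewrite /nu; apply: leq_bigmax_cond. Qed.

End Join.


Lemma exists_max (V : finType) (h : rel V) (k : nat) :
  exists c : colT V k, valid h c /\ forall c' : colT V k, valid h c' -> csize c' <= csize c.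
Proof.
pose c0 : colT V k := [ffun _ => None].
have v0 : valid h c0.
  by apply/validP; split=> [x y|x y|x y z a]; rewrite !ffunE.
case: (@arg_maxnP _ c0 (fun c => valid h c) (fun c => csize c) v0) => c vc m.
by exists c; split => // c' v'; exact: m.
Qed.

Unset Implicit Arguments.
Theorem mainTheorem9 (V : finType) (h : rel V) (k : nat) :
  simple_graph h -> triangle_free h -> 1 <= k ->
  tau (join_Ik k h) <= 2 * nu (join_Ik k h).
Proof.
move=> [hsym hirr] htf _.
have [c [vc mx]] := exists_max h k.
set X := [set v | full c v].
have co := core hsym hirr (conj vc mx); rewrite -/X in co.
have hs1 : forall x y, (h x y && (x \notin X) && (y \notin X)) = (h y x && (y \notin X) && (x \notin X)).
  by move=> x y; rewrite hsym -!andbA; congr (_ && _); rewrite andbC.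
have hi1 : forall x, ~~ (h x x && (x \notin X) && (x \notin X)) by move=> x; rewrite hirr.
rewrite (half (P := fun x y => h x y && (x \notin X) && (y \notin X))) // in co.
have /validP[S Hh P] := vc.
have cs : csize c = #|[set p : V * V | c (p.1, p.2) != None]|.
  by rewrite /csize; apply: eq_card => -[x y]; rewrite !inE.
have hs2 : forall x y, (c (x,y) != None) = (c (y,x) != None) by move=> x y; rewrite S.
have hi2 : forall x, ~~ (c (x,x) != None) by move=> x; apply/negP => /Hh; rewrite hirr.
rewrite cs (half (P := fun x y => c (x,y) != None)) // in co.
have pc := pack_card vc.
have pk := nu_ge (pack_ok vc).
apply: leq_trans (tau_le htf (cover_hit k hsym hirr htf X)) _.
apply: leq_trans (cover_card h k X) _.
apply: (leq_trans _ (leq_mul (leqnn 2) pk)); rewrite pc.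
rewrite -mulnDr leq_pmul2l // in co.
apply: leq_trans co _; rewrite leq_mul2l; apply/orP; right.
by apply: subset_leq_card; apply/subsetP => -[x y]; rewrite !inE.
Qed.
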